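(* Let $p$ be an odd prime and $m=p-1$. Let $O$ be either $\tilde D_b$ or $\tilde E_b$ for any $b\in\{0,1,\ldots,p-1\}$ (an $m\times m$ sequence design). Then: (i) $O$ is a Latin square, i.e., every row and every column of $O$ is a permutation of $\{1,\ldots,m\}$; (ii) $O$ is pair-balanced with $t_{i,j}=1$ for all $1\le i\ne j\le m$; (iii) $d_H(O)=m$.
   Context: Let $p$ be an odd prime, $m=p-1$, $h=(1,\ldots,m)$. The good lattice point set $D_0$ is the $p\times m$ matrix whose $i$th row is $i\,h \pmod p$, $i=1,\ldots,p$ (so its last row is $(0,\ldots,0)$). The Williams transformation $W:\{0,\ldots,p-1\}\to\{0,\ldots,p-1\}$ is $W(x)=2x$ for $0\le x<p/2$ and $W(x)=2(p-x)-1$ for $p/2\le x\le p-1$. For $b\in\{0,\ldots,p-1\}$, $D_b=D_0+b\pmod p$ entrywise (last row $(b,\ldots,b)$) and $E_b=W(D_b)$ entrywise (last row $(W(b),\ldots,W(b))$). The leave-one-out design $\tilde D_b$ is obtained from $D_b$ by deleting its last row and replacing each entry $x$ by $x+1$ if $x<b$ and leaving it as $x$ if $x>b$; $\tilde E_b$ is obtained from $E_b$ by deleting its last row and replacing each entry $x$ by $x+1$ if $x<W(b)$ and by $x$ if $x>W(b)$. Both are $m\times m$ matrices with entries in $\{1,\ldots,m\}$. A sequence design is a matrix each of whose rows is a permutation of $\{1,\ldots,m\}$. For $i\ne j$, $t_{i,j}$ is the number of times component $i$ is immediately followed by component $j$ (i.e., the number of pairs (row $r$, position $s$) with $O_{rs}=i$,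 $O_{r,s+1}=j$). $O$ is pair-balanced if all $t_{i,j}$, $i\ne j$, are equal. $d_H(o_i,o_j)=\#\{k:o_{ik}\ne o_{jk}\}$ and $d_H(O)$ is the minimum over distinct row pairs. *)

(* Defs.v *)
From mathcomp Require Import all_boot.
Set Implicit Arguments. Unset Strict Implicit. Unset Printing Implicit Defensive.

(* A design with m rows and m columns is represented as a function
   O : nat -> nat -> nat ; O r s is the entry in row r (0 <= r < m),
   position s (0 <= s < m).  Rows/positions are 0-based here. *)

Definition W (p x : nat) : nat :=
  if 2 * x < p then 2 * x else 2 * (p - x) - 1.

Definition Db (p b i k : nat) : nat := (i * k + b) %% p.

Definition Eb (p b i k : nat) : nat := W p (Db p b i k).

(* Leave-one-out relabelling with respect to the value c (deleted last row
   has constant value c): x -> x+1 if x < c, x otherwise. *)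
Definition loo (c x : nat) : nat := if x < c then x.+1 else x.

(* tilde D_b : rows 1..m of D_b (row index r = i-1, position s = k-1). *)
Definition Dtilde (p b : nat) : nat -> nat -> nat :=
  fun r s => loo b (Db p b r.+1 s.+1).

(* tilde E_b : rows 1..m of E_b relabelled w.r.t. W(b). *)
Definition Etilde (p b : nat) : nat -> nat -> nat :=
  fun r s => loo (W p b) (Eb p b r.+1 s.+1).

Definition latin_square (O : nat -> nat -> nat) (m : nat) : Prop :=
  (forall r, r < m -> perm_eq [seq O r s | s <- iota 0 m] (iota 1 m)) /\
  (forall s, s < m -> perm_eq [seq O r s | r <- iota 0 m] (iota 1 m)).

Definition tcount (O : nat -> nat -> nat) (m i j : nat) : nat :=
  \sum_(r < m) \sum_(s < m.-1) ((O r s == i) && (O r s.+1 == j)).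

Definition pair_balanced (O : nat -> nat -> nat) (m : nat) : Prop :=
  forall i j i' j', 0 < i <= m -> 0 < j <= m -> 0 < i' <= m -> 0 < j' <= m ->
    i != j -> i' != j' -> tcount O m i j = tcount O m i' j'.

Definition dH (O : nat -> nat -> nat) (m r1 r2 : nat) : nat :=
  \sum_(k < m) (O r1 k != O r2 k).

(* Minimum Hamming distance over distinct row pairs (every dH is <= m,
   so the neutral element m of minn does not affect the minimum when
   there are at least two rows). *)
Definition dH_min (O : nat -> nat -> nat) (m : nat) : nat :=
  \big[minn/m]_(r1 < m) \big[minn/m]_(r2 < m | r1 != r2) dH O m r1 r2.

(* Main.v *)
Require Import Defs.
From mathcomp Require Import all_boot all_algebra zify ring.
Import GRing.Theory.

Lemma perm_of_inj (m : nat) (f : nat -> nat) :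
  (forall s, s < m -> 0 < f s <= m) ->
  (forall s s', s < m -> s' < m -> f s = f s' -> s = s') ->
  perm_eq [seq f s | s <- iota 0 m] (iota 1 m).
Proof.
move=> hr hi.
have U : uniq [seq f s | s <- iota 0 m].
  rewrite map_inj_in_uniq ?iota_uniq // => x y; rewrite !mem_iota /= !add0n.
  exact: hi.
have S : {subset [seq f s | s <- iota 0 m] <= iota 1 m}.
  move=> x /mapP [s]; rewrite mem_iota add0n /= => hs ->.
  rewrite mem_iota; have := hr s hs; lia.
have Sz : (size (iota 1 m) <= size [seq f s | s <- iota 0 m])%N by rewrite size_map !size_iota.
have [_ E] := uniq_min_size U S Sz.
by apply: uniq_perm => //; apply: iota_uniq.
Qed.

Lemma loo_inj c y z : y != c -> z != c -> loo c y = loo c z -> y = z.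
Proof. rewrite /loo; case: (ltnP y c); case: (ltnP z c); lia. Qed.

Section S.
Variables (p b : nat).
Hypotheses (pp : prime p) (bp : b < p).
Local Open Scope ring_scope.
Local Notation I n := (n%:R : 'F_p).

Lemma p_gt1 : (1 < p)%N. Proof. exact: prime_gt1. Qed.

Lemma Iinj x y : (x < p)%N -> (y < p)%N -> I x = I y -> x = y.
Proof.
move=> xp yp h.
have := val_Fp_nat pp x; rewrite h val_Fp_nat // !modn_small //.
Qed.

Lemma Imod x : I (x %% p) = I x. Proof. exact: Fp_nat_mod. Qed.

Lemma Inz n : (0 < n < p)%N -> I n != 0.
Proof.
move=> hn; apply/eqP => h.
have : n = 0%N by apply: Iinj => //; [lia | have := p_gt1; lia].
lia.
Qed.

Lemma Ival (f : 'F_p) : I (val f) = f. Proof. by rewrite natr_Zp. Qed.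
Lemma val_lt (f : 'F_p) : (val f < p)%N.
Proof. rewrite -[X in (_ < X)%N](Fp_cast pp); exact: ltn_ord. Qed.

Definition v r s := ((r.+1 * s.+1 + b) %% p)%N.

Lemma Iv r s : I (v r s) = I r.+1 * I s.+1 + I b.
Proof. by rewrite /v Imod natrD natrM. Qed.

Lemma vlt r s : (v r s < p)%N.
Proof. by rewrite /v ltn_pmod // prime_gt0. Qed.

Lemma vneb r s : (r < p.-1)%N -> (s < p.-1)%N -> v r s != b.
Proof.
move=> hr hs; apply/eqP => h.
have : I (v r s) = I b by rewrite h.
rewrite Iv => /eqP; rewrite -subr_eq0 addrK mulf_eq0 => /orP [] /eqP.
  by apply/eqP/Inz; have := p_gt1; lia.
by apply/eqP/Inz; have := p_gt1; lia.
Qed.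

Lemma vrow r s s' : (r < p.-1)%N -> (s < p.-1)%N -> (s' < p.-1)%N ->
  v r s = v r s' -> s = s'.
Proof.
move=> hr hs hs' h.
have : I (v r s) = I (v r s') by rewrite h.
rewrite !Iv => /addIr /mulfI H.
have : s.+1 = s'.+1.
  apply: Iinj; [have := p_gt1; lia | have := p_gt1; lia | ].
  apply: H; apply/Inz; have := p_gt1; lia.
by case.
Qed.

Lemma vcol r r' s : (r < p.-1)%N -> (r' < p.-1)%N -> (s < p.-1)%N ->
  v r s = v r' s -> r = r'.
Proof.
move=> hr hr' hs h.
have : I (v r s) = I (v r' s) by rewrite h.
rewrite !Iv => /addIr /mulIf H.
have : r.+1 = r'.+1.
  apply: Iinj; [have := p_gt1; lia | have := p_gt1; lia | ].
  apply: H; apply/Inz; have := p_gt1; lia.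
by case.
Qed.

Lemma Isucc r s : I (v r s.+1) = I (v r s) + I r.+1.
Proof.
rewrite !Iv; have -> : s.+2 = (s.+1 + 1)%N by rewrite addn1.
rewrite natrD; ring.
Qed.

Lemma vuniq r r' s s' : (r < p.-1)%N -> (r' < p.-1)%N ->
  (s < p.-1)%N -> (s' < p.-1)%N ->
  v r s = v r' s' -> v r s.+1 = v r' s'.+1 -> r = r' /\ s = s'.
Proof.
move=> hr hr' hs hs' h1 h2.
have : I (v r s.+1) = I (v r' s'.+1) by rewrite h2.
rewrite !Isucc h1 => /addrI H.
have E : r.+1 = r'.+1 by apply: Iinj => //; have := p_gt1; lia.
case: E => E; subst r'; split => //; exact: vrow h1.
Qed.

Lemma vexist u w : (u < p)%N -> (w < p)%N -> u != b -> w != b -> u != w ->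
  exists r s, [/\ (r < p.-1)%N, (s.+1 < p.-1)%N, v r s = u & v r s.+1 = w].
Proof.
move=> hu hw hub hwb huw.
have Iub : I u != I b by apply/eqP => /Iinj h; move/eqP: hub; apply; apply: h.
have Iwb : I w != I b by apply/eqP => /Iinj h; move/eqP: hwb; apply; apply: h.
have Iuw : I u != I w by apply/eqP => /Iinj h; move/eqP: huw; apply; apply: h.
set d := I w - I u.
have dnz : d != 0 by rewrite subr_eq0 eq_sym.
set t := (I u - I b) / d.
have tnz : t != 0 by rewrite mulf_eq0 invr_eq0 negb_or subr_eq0 Iub.
have tn1 : t != -1.
  apply/eqP => ht.
  have : t * d = I u - I b by rewrite /t divfK.
  rewrite ht /d mulN1r opprB => /eqP; rewrite -subr_eq0.
  have -> : I u - I w - (I u - I b) = I b - I w by ring.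
  by rewrite subr_eq0 eq_sym (negbTE Iwb).
have vd0 : val d != 0%N by apply: contra dnz => /eqP h; rewrite -(Ival d) h.
have vt0 : val t != 0%N by apply: contra tnz => /eqP h; rewrite -(Ival t) h.
have vtn : val t != p.-1.
  apply: contra tn1 => /eqP h; apply/eqP; rewrite -(Ival t) h.
  have E : p = (p.-1 + 1)%N by have := p_gt1; lia.
  have : I (p.-1 + 1) = 0 by rewrite -E; exact: pchar_Fp_0.
  by rewrite natrD => /eqP; rewrite addr_eq0 => /eqP.
have hd := val_lt d; have ht := val_lt t.
exists (val d).-1, (val t).-1.
have Er : ((val d).-1.+1 = val d)%N by lia.
have Es : ((val t).-1.+1 = val t)%N by lia.
have V1 : I (v (val d).-1 (val t).-1) = I u.
  by rewrite Iv Er Es !Ival /t mulrC divfK // subrK.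
split; [lia | lia | | ].
  by apply: Iinj => //; apply: vlt.
apply: Iinj => //; first exact: vlt.
by rewrite Isucc V1 Er Ival /d addrC subrK.
Qed.

End S.

Section Main.
Variables (p b : nat) (phi : nat -> nat) (O : nat -> nat -> nat).
Hypotheses (pp : prime p) (bp : b < p).
Hypothesis phi_lt : forall x, x < p -> phi x < p.
Hypothesis phi_inj : forall x y, x < p -> y < p -> phi x = phi y -> x = y.
Hypothesis phi_sur : forall y, y < p -> exists2 x, x < p & phi x = y.
Hypothesis HO : forall r s, O r s = loo (phi b) (phi (v p b r s)).

Let G x := loo (phi b) (phi x).

Lemma G1 x : x < p -> x != b -> 0 < G x <= p.-1.
Proof.
move=> hx hxb; rewrite /G /loo.
have h1 := phi_lt _ hx; have h2 := phi_lt _ bp.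
have h3 : phi x != phi b by apply: contra hxb => /eqP /phi_inj ->.
move: h3; case: (ltnP (phi x) (phi b)); lia.
Qed.

Lemma G2 x y : x < p -> y < p -> x != b -> y != b -> G x = G y -> x = y.
Proof.
move=> hx hy hxb hyb /loo_inj h; apply: phi_inj => //; apply: h.
  by apply: contra hxb => /eqP /phi_inj ->.
by apply: contra hyb => /eqP /phi_inj ->.
Qed.

Lemma G3 i : 0 < i <= p.-1 -> exists x, [/\ x < p, x != b & G x = i].
Proof.
move=> hi; have h2 := phi_lt _ bp.
set c := phi b in h2 *.
set y := if i <= c then i.-1 else i.
have hy : y < p by rewrite /y; case: (leqP i c); lia.
have [x hx ex] := phi_sur _ hy.
exists x; split => //.
  apply/eqP => E; move: ex; rewrite E -/c /y; case: (leqP i c); lia.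
rewrite /G ex -/c /y; case: (leqP i c) => h; rewrite /loo; case: ltnP; lia.
Qed.

Lemma Orange r s : r < p.-1 -> s < p.-1 -> 0 < O r s <= p.-1.
Proof. by move=> hr hs; rewrite HO; apply: G1 => //; [apply: (vlt p b pp) | apply: (vneb p b pp bp)]. Qed.

Lemma main_thm :
  [/\ latin_square O p.-1,
      pair_balanced O p.-1,
      (forall i j, 0 < i <= p.-1 -> 0 < j <= p.-1 -> i != j ->
         tcount O p.-1 i j = 1)
    & dH_min O p.-1 = p.-1].
Proof.
have t1 : forall i j, 0 < i <= p.-1 -> 0 < j <= p.-1 -> i != j ->
         tcount O p.-1 i j = 1.
  move=> i j hi hj hij.
  have [u [hu hub Gu]] := G3 _ hi.
  have [w [hw hwb Gw]] := G3 _ hj.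
  have huw : u != w by apply: contra hij => /eqP E; rewrite -Gu -Gw E.
  have [r0 [s0 [hr0 hs0 V1 V2]]] := vexist p b pp bp _ _ hu hw hub hwb huw.
  have hs0' : s0 < p.-1.-1 by lia.
  have uniq : forall r s, r < p.-1 -> s < p.-1.-1 ->
     O r s = i -> O r s.+1 = j -> r = r0 /\ s = s0.
    move=> r s hr hs E1 E2.
    have e1 : v p b r s = u.
      apply: G2 => //; [apply: (vlt p b pp) | apply: (vneb p b pp bp) => //; lia | by rewrite Gu -E1 HO].
    have e2 : v p b r s.+1 = w.
      apply: G2 => //; [apply: (vlt p b pp) | apply: (vneb p b pp bp) => //; lia | by rewrite Gw -E2 HO].
    apply: (vuniq p b pp bp r r0 s s0) => //; [lia | lia | by rewrite e1 V1 | by rewrite e2 V2].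
  rewrite /tcount (bigD1 (Ordinal hr0)) //= (bigD1 (Ordinal hs0')) //=.
  rewrite !HO V1 V2 -/(G u) -/(G w) Gu Gw !eqxx /=.
  rewrite big1; last first.
    move=> s /eqP hs; apply/eqP; rewrite eqb0; apply/negP => /andP [/eqP E1 /eqP E2].
    apply: hs; apply: val_inj => /=.
    by have := uniq r0 s hr0 (ltn_ord s) => /(_ E1 E2) [].
  rewrite big1 //.
  move=> r /eqP hr; apply: big1 => s _; apply/eqP; rewrite eqb0; apply/negP.
  move=> /andP [/eqP E1 /eqP E2]; apply: hr; apply: val_inj => /=.
  by have := uniq r s (ltn_ord r) (ltn_ord s) => /(_ E1 E2) [].
split => //.
- split.
  + move=> r hr; apply: perm_of_inj; first by move=> s hs; apply: Orange.
    move=> s s' hs hs'; rewrite !HO => /G2 h.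
    apply: (vrow p b pp bp _ _ _ hr hs hs'); apply: h; (try apply: (vlt p b pp)); apply: (vneb p b pp bp) => //.
  + move=> s hs; apply: perm_of_inj; first by move=> r hr; apply: Orange.
    move=> r r' hr hr'; rewrite !HO => /G2 h.
    apply: (vcol p b pp bp _ _ _ hr hr' hs); apply: h; (try apply: (vlt p b pp)); apply: (vneb p b pp bp) => //.
- move=> i j i' j' hi hj hi' hj' hij hij'; by rewrite !t1.
have dHm : forall r1 r2 : 'I_p.-1, r1 != r2 -> dH O p.-1 r1 r2 = p.-1.
  move=> r1 r2 hne; rewrite /dH (eq_bigr (fun _ => 1)).
    by rewrite sum1_card card_ord.
  move=> k _; suff -> : O r1 k != O r2 k by [].
  apply/negP => /eqP; rewrite !HO => /G2 h.
  move/eqP: hne; apply; apply: val_inj.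
  apply: (vcol p b pp bp _ _ _ (ltn_ord r1) (ltn_ord r2) (ltn_ord k)).
  by apply: h; (try apply: (vlt p b pp)); apply: (vneb p b pp bp).
rewrite /dH_min; apply: (big_ind (fun x => x = p.-1)) => //.
  by move=> x y -> ->; rewrite minnn.
move=> r1 _; apply: (big_ind (fun x => x = p.-1)) => //.
  by move=> x y -> ->; rewrite minnn.
exact: dHm.
Qed.

End Main.

Lemma W_lt p x : x < p -> W p x < p.
Proof. rewrite /W; case: (ltnP (2 * x) p); lia. Qed.

Lemma W_inj p x y : x < p -> y < p -> W p x = W p y -> x = y.
Proof. rewrite /W; case: (ltnP (2 * x) p); case: (ltnP (2 * y) p); lia. Qed.

Lemma W_sur p y : odd p -> y < p -> exists2 x, x < p & W p x = y.
Proof.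
move=> op hy.
have := odd_double_half p; rewrite op -muln2 /= => hp.
have := odd_double_half y; rewrite -muln2.
case: (odd y) => /= hy'.
- exists (p - (y./2).+1); first lia.
  rewrite /W; case: (ltnP (2 * (p - (y./2).+1)) p); lia.
- exists y./2; first lia.
  rewrite /W; case: (ltnP (2 * y./2) p); lia.
Qed.

Theorem theorem1 (p b : nat) (O : nat -> nat -> nat) :
  prime p -> odd p -> b < p ->
  (O = Dtilde p b \/ O = Etilde p b) ->
  [/\ latin_square O p.-1,
      pair_balanced O p.-1,
      (forall i j, 0 < i <= p.-1 -> 0 < j <= p.-1 -> i != j ->
         tcount O p.-1 i j = 1)
    & dH_min O p.-1 = p.-1].
Proof.
move=> pp op bp [] ->.
- apply: (main_thm p b id) => //.
  by move=> y hy; exists y.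
- apply: (main_thm p b (W p)) => //.
  + exact: W_lt.
  + exact: W_inj.
  + by move=> y hy; apply: W_sur.
Qed.
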